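(* If $w\in\mathbb{R}^n$, $w\ge0$, is strongly bilevel feasible, then there exists an extreme point $x$ of $\mathcal{X}$ such that $x$ is bilevel feasible and $x_{\mathcal{A}_1}=w$.
   Context: Single-commodity network pricing setting: $G=(\mathcal{V},\mathcal{A})$ directed graph, arc costs $c\ge0$, nonempty tolled arc set $\mathcal{A}_1\subsetneq\mathcal{A}$, $n=|\mathcal{A}_1|$, $N$ node–arc incidence matrix, single origin $o$ and destination $d$ connected by a toll-free path, $b_o=1$, $b_d=-1$, $b_i=0$ otherwise, $\mathcal{X}=\{x\in\mathbb{R}^{\mathcal{A}}: Nx=b,\ x\ge0\}$, $x_{\mathcal{A}_1}$ the restriction of $x$ to $\mathcal{A}_1$. Let $f(t)=\min\{c^\top x+t^\top x_{\mathcal{A}_1}: x\in\mathcal{X}\}$ for $t\in\mathbb{R}^n$, $t\ge0$, $f(t)=-\infty$ otherwise, and $g(w)=\sup_{t\in\mathbb{R}^n}\{f(t)-t^\top w\}$. A vector $w\ge0$ is strongly bilevel feasible when $\{w\}$ is a reaction set, i.e. $\{w\}=\{w':(w',z)\in F\text{ for some }z\}$ for a face $F$ of $\operatorname{epi}(g)$ whose affine hull's direction space does not contain $(0,1)$. A point $x\in\mathcal{X}$ is bilevel feasible if the hyperplane $\{(t,z): z=-c^\top x-t^\top x_{\mathcal{A}_1}\}$ supports $\operatorname{epi}(-f)$ (i.e. $\operatorname{epi}(-f)$ lies in $\{z\ge -c^\top x-t^\top x_{\mathcal{A}_1}\}$ and meets the hyperplane). *)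

(* Defs.v *)
From HB Require Import structures.
From mathcomp Require Import all_boot all_order all_algebra.
From mathcomp Require Import boolp classical_sets reals constructive_ereal ereal.
Set Implicit Arguments. Unset Strict Implicit. Unset Printing Implicit Defensive.
Import Order.TTheory GRing.Theory Num.Theory.
Local Open Scope ring_scope.
Local Open Scope classical_set_scope.

Section Pricing.
Variables (R : realType) (V A : finType) (tail head : A -> V).

(* the tolled arcs A1, enumerated as coordinates 0..n-1 with n = #|A1| *)
Variable A1 : {set A}.
Notation n := #|A1|.

Definition dotv (t w : 'rV[R]_n) : R := \sum_(i < n) t ord0 i * w ord0 i.

Definition restrA1 (x : A -> R) : 'rV[R]_n := \row_(i < n) x (enum_val i).

Definition rhs (o d : V) (v : V) : R :=
  if v == o then 1 else if v == d then -1 else 0.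

(* feasible set X = { x | N x = b, x >= 0 }, N the node-arc incidence
   matrix (+1 at the tail, -1 at the head of each arc) *)
Definition feasX (o d : V) : set (A -> R) :=
  [set x | (forall v : V,
              \sum_(a | tail a == v) x a - \sum_(a | head a == v) x a = rhs o d v)
           /\ (forall a, 0 <= x a)].

Definition extreme_point (C : set (A -> R)) (x : A -> R) : Prop :=
  C x /\ forall (y z : A -> R) (l : R), C y -> C z -> 0 < l < 1 ->
    x = (fun a => l * y a + (1 - l) * z a) -> y = x /\ z = x.

Definition nonneg_vec (t : 'rV[R]_n) : Prop := forall i, 0 <= t ord0 i.

Definition fval (c : A -> R) (o d : V) (t : 'rV[R]_n) : \bar R :=
  if `[< nonneg_vec t >] then
    ereal_inf [set ((\sum_a c a * x a) + dotv t (restrA1 x))%:E | x in feasX o d]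
  else -oo%E.

Definition gval (c : A -> R) (o d : V) (w : 'rV[R]_n) : \bar R :=
  ereal_sup [set (fval c o d t - (dotv t w)%:E)%E | t in [set: 'rV[R]_n]].

Definition epi_g (c : A -> R) (o d : V) : set ('rV[R]_n * R) :=
  [set p | (gval c o d p.1 <= p.2%:E)%E].

Definition comb (l : R) (p q : 'rV[R]_n * R) : 'rV[R]_n * R :=
  (l *: p.1 + (1 - l) *: q.1, l * p.2 + (1 - l) * q.2).

Definition is_face (C F : set ('rV[R]_n * R)) : Prop :=
  F `<=` C /\
  (forall p q l, F p -> F q -> 0 <= l <= 1 -> F (comb l p q)) /\
  (forall p q l, C p -> C q -> 0 < l < 1 -> F (comb l p q) -> F p /\ F q).

(* (0,1) lies in the direction space of aff(F), i.e. the linear span of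
   { p - q : p, q in F } *)
Definition vertical_in_dir (F : set ('rV[R]_n * R)) : Prop :=
  exists s : seq (R * (('rV[R]_n * R) * ('rV[R]_n * R))),
    (forall k, k \in s -> F k.2.1 /\ F k.2.2) /\
    \sum_(k <- s) k.1 *: (k.2.1.1 - k.2.2.1) = 0 /\
    \sum_(k <- s) k.1 * (k.2.1.2 - k.2.2.2) = 1.

Definition strongly_bilevel_feasible (c : A -> R) (o d : V) (w : 'rV[R]_n) : Prop :=
  exists F : set ('rV[R]_n * R),
    is_face (epi_g c o d) F /\ ~ vertical_in_dir F /\
    [set w' | exists z, F (w', z)] = [set w].

Definition epi_negf (c : A -> R) (o d : V) : set ('rV[R]_n * R) :=
  [set p | (- fval c o d p.1 <= p.2%:E)%E].

Definition bilevel_feasible (c : A -> R) (o d : V) (x : A -> R) : Prop :=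
  feasX o d x /\
  (forall p, epi_negf c o d p ->
     - (\sum_a c a * x a) - dotv p.1 (restrA1 x) <= p.2) /\
  (exists p, epi_negf c o d p /\
     p.2 = - (\sum_a c a * x a) - dotv p.1 (restrA1 x)).

Definition tollfree_path (o d : V) (s : seq A) : Prop :=
  [/\ s != [::],
      (forall a, a \in s -> a \notin A1),
      (forall a, ohead s = Some a -> tail a = o),
      (forall a0, head (last a0 s) = d) &
      (forall i, (i.+1 < size s)%N ->
         forall a0, head (nth a0 s i) = tail (nth a0 s i.+1))].

End Pricing.

Arguments fval {R V A} tail head A1 c o d t.
Arguments gval {R V A} tail head A1 c o d w.
Arguments epi_g {R V A} tail head A1 c o d _.
Arguments epi_negf {R V A} tail head A1 c o d _.
Arguments strongly_bilevel_feasible {R V A} tail head A1 c o d w.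
Arguments bilevel_feasible {R V A} tail head A1 c o d x.
Arguments is_face {R A} A1 C F.
Arguments vertical_in_dir {R A} A1 F.

(* Main.v *)
Require Import Defs.
From HB Require Import structures.
From mathcomp Require Import all_boot all_order all_algebra.
From mathcomp Require Import boolp classical_sets reals constructive_ereal ereal.
From mathcomp Require Import ring lra.
From Stdlib Require List.
Set Implicit Arguments. Unset Strict Implicit. Unset Printing Implicit Defensive.
Import Order.TTheory GRing.Theory Num.Theory.
Local Open Scope ring_scope.

Section FM.
Variables (R : realFieldType) (I : finType).

Definition fdot (a y : I -> R) : R := \sum_i a i * y i.

Inductive conic (L : list ((I -> R) * R)) : (I -> R) -> R -> Prop :=
| conic0 : conic L (fun _ => 0) 0
| conicM : forall a b k, List.In (a, b) L -> 0 <= k ->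
    conic L (fun i => k * a i) (k * b)
| conicD : forall a1 b1 a2 b2, conic L a1 b1 -> conic L a2 b2 ->
    conic L (fun i => a1 i + a2 i) (b1 + b2)
| conicE : forall a a' b b', conic L a b -> (forall i, a i = a' i) -> b = b' ->
    conic L a' b'.

Lemma conic_scale L a b k : 0 <= k -> conic L a b ->
  conic L (fun i => k * a i) (k * b).
Proof.
move=> k0; elim=> {a b}.
- apply: (conicE (conic0 L)) => [i|]; by rewrite mulr0.
- move=> a b k' Hin k'0; apply: (conicE (conicM Hin (mulr_ge0 k0 k'0))) => [i|];
  by rewrite mulrA.
- move=> a1 b1 a2 b2 _ H1 _ H2; apply: (conicE (conicD H1 H2)) => [i|];
  by rewrite mulrDr.
- move=> a a' b b' _ H Ha Hb; apply: (conicE H) => [i|]; by rewrite ?Ha ?Hb.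
Qed.

Lemma conic_sub L L' a b : (forall a b, List.In (a, b) L' -> conic L a b) ->
  conic L' a b -> conic L a b.
Proof.
move=> HL; elim=> {a b}.
- exact: conic0.
- move=> a b k Hin k0; exact: conic_scale (HL _ _ Hin).
- move=> a1 b1 a2 b2 _ H1 _ H2; exact: conicD.
- move=> a a' b b' _ H Ha Hb; exact: conicE H Ha Hb.
Qed.

Lemma sep_lists (lo hi : list R) :
  (forall x y, List.In x lo -> List.In y hi -> x <= y) ->
  exists s, (forall x, List.In x lo -> x <= s) /\ (forall y, List.In y hi -> s <= y).
Proof.
elim: lo => [|x lo IH] H.
  elim: hi {H} => [|y hi [s [_ Hs]]]; first by exists 0.
  exists (Num.min y s); split => // y' /= [<-|Hy']; first by rewrite ge_min lexx.
  by rewrite ge_min Hs ?orbT.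
have [s [Hs1 Hs2]] : exists s, (forall x, List.In x lo -> x <= s) /\
    (forall y, List.In y hi -> s <= y).
  by apply: IH => x' y Hx Hy; apply: H => //=; right.
exists (Num.max x s); split.
  move=> x' /= [<-|Hx']; first by rewrite le_max lexx.
  by rewrite le_max Hs1 ?orbT.
move=> y Hy; rewrite ge_max Hs2 // andbT; apply: H => //=; by left.
Qed.

Definition upd (y : I -> R) (i0 : I) (s : R) : I -> R :=
  fun i => if i == i0 then s else y i.

Lemma fdot_upd a y i0 s :
  fdot a (upd y i0 s) = fdot a y - a i0 * y i0 + a i0 * s.
Proof.
rewrite /fdot (bigD1 i0) //= (bigD1 i0 (P := predT)) //= /upd eqxx.
have -> : \sum_(i | i != i0) a i * (if i == i0 then s else y i) =
          \sum_(i | i != i0) a i * y i.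
  by apply: eq_bigr => i /negbTE ->.
ring.
Qed.

Lemma fdot_lin (k1 k2 : R) a1 a2 y :
  fdot (fun i => k1 * a1 i + k2 * a2 i) y = k1 * fdot a1 y + k2 * fdot a2 y.
Proof.
rewrite /fdot !mulr_sumr -big_split /=; apply: eq_bigr => i _; ring.
Qed.

Definition fmcomb (i0 : I) (p q : (I -> R) * R) : (I -> R) * R :=
  ((fun i => (- q.1 i0) * p.1 i + p.1 i0 * q.1 i), (- q.1 i0) * p.2 + p.1 i0 * q.2).

Lemma FM_aux (n : nat) : forall (E : {set I}) (L : list ((I -> R) * R)),
  #|E| = n ->
  (forall a b, List.In (a, b) L -> forall i, i \notin E -> a i = 0) ->
  (exists y, forall a b, List.In (a, b) L -> fdot a y <= b) \/
  (exists b, b < 0 /\ conic L (fun _ => 0) b).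
Proof.
elim: n => [|n IH] E L HE HL.
  have E0 : E = finset.set0 by apply/eqP; rewrite -cards_eq0 HE.
  case: (boolp.pselect (exists a b, List.In (a, b) L /\ b < 0)) => [[a [b [Hin Hb]]]|Hno].
    right; exists b; split => //.
    apply: (conicE (conicM Hin ler01)) => [i|]; last by rewrite mul1r.
    by rewrite (HL _ _ Hin) ?E0 ?inE // mulr0.
  left; exists (fun _ => 0) => a b Hin.
  rewrite /fdot big1 => [|i _]; last by rewrite mulr0.
  rewrite leNgt; apply/negP => Hb; apply: Hno; by exists a, b.
have : (0 < #|E|)%N by rewrite HE.
case/card_gt0P => i0 Hi0.
pose E' := E :\ i0.
have HE' : #|E'| = n.
  by move: HE; rewrite (cardsD1 i0 E) Hi0 add1n => -[].
pose Lz := List.filter (fun r => r.1 i0 == 0) L.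
pose Lp := List.filter (fun r => 0 < r.1 i0) L.
pose Ln := List.filter (fun r => r.1 i0 < 0) L.
pose L' := Lz ++ List.flat_map (fun p => List.map (fmcomb i0 p) Ln) Lp.
have HL'P : forall r, List.In r L' ->
   List.In r Lz \/ exists p q, List.In p Lp /\ List.In q Ln /\ r = fmcomb i0 p q.
  move=> r; rewrite List.in_app_iff => -[H|]; first by left.
  case/List.in_flat_map => p [Hp]; case/List.in_map_iff => q [<- Hq].
  by right; exists p, q.
have HL' : forall a b, List.In (a, b) L' -> forall i, i \notin E' -> a i = 0.
  move=> a b /HL'P [|[p [q [Hp [Hq Hr]]]]].
    case/List.filter_In => Hin /eqP Ha0 i; rewrite in_setD1 negb_and negbK.
    case/orP => [/eqP -> //|]; exact: HL Hin i.
  case: Hr => -> _ i; rewrite in_setD1 negb_and negbK.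
  case/orP => [/eqP ->|HiE]; first by rewrite mulrC; ring.
  move: Hp Hq => /List.filter_In [Hp _] /List.filter_In [Hq _].
  case: p Hp => pa pb Hp; case: q Hq => qa qb Hq /=.
  by rewrite (HL _ _ Hp i HiE) (HL _ _ Hq i HiE) !mulr0 addr0.
case: (IH E' L' HE' HL') => [[y' Hy']|[b [Hb Hc]]]; last first.
  right; exists b; split => //; apply: (conic_sub _ Hc) => a b' /HL'P.
  case => [|[p [q [Hp [Hq Hr]]]]].
    case/List.filter_In => Hin _.
    by apply: (conicE (conicM Hin ler01)) => [i|]; rewrite mul1r.
  move: Hp Hq => /List.filter_In [Hp Hp0] /List.filter_In [Hq Hq0].
  case: p Hp Hp0 Hr => pa pb Hp /= Hp0; case: q Hq Hq0 => qa qb Hq /= Hq0 [-> ->].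
  apply: conicD; apply: conicM => //.
    by rewrite oppr_ge0 ltW.
  exact: ltW.
pose r (a : I -> R) := fdot a y' - a i0 * y' i0.
have Hcomb : forall p q, List.In p Lp -> List.In q Ln ->
    (q.2 - r q.1) / q.1 i0 <= (p.2 - r p.1) / p.1 i0.
  move=> [pa pb] [qa qb] Hp Hq.
  have Hin : List.In (fmcomb i0 (pa, pb) (qa, qb)) L'.
    apply/List.in_app_iff; right; apply/List.in_flat_map; exists (pa, pb); split => //.
    by apply/List.in_map_iff; exists (qa, qb).
  move: (Hy' _ _ Hin); rewrite fdot_lin /=.
  move: Hp Hq => /List.filter_In [_ /= Hp0] /List.filter_In [_ /= Hq0] Hineq.
  set D := (qb - r qa) / qa i0; set U := (pb - r pa) / pa i0.
  have HD : qb - r qa = D * qa i0 by rewrite /D divfK // ltr0_neq0.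
  have HU : pb - r pa = U * pa i0 by rewrite /U divfK // lt0r_neq0.
  have H0 : 0 <= pa i0 * (qa i0 * (D - U)).
    have -> : pa i0 * (qa i0 * (D - U)) = pa i0 * (qb - r qa) - qa i0 * (pb - r pa).
      by rewrite HD HU; ring.
    rewrite /r; lra.
  rewrite pmulr_rge0 // nmulr_rge0 // in H0; by rewrite -subr_le0.
have Hsep : (forall x y, List.In x (List.map (fun q => (q.2 - r q.1) / q.1 i0) Ln) ->
     List.In y (List.map (fun p => (p.2 - r p.1) / p.1 i0) Lp) -> x <= y).
    move=> x y /List.in_map_iff [q [<- Hq]] /List.in_map_iff [p [<- Hp]]; exact: Hcomb.
have [s [Hs1 Hs2]] := sep_lists Hsep.
left; exists (upd y' i0 s) => a b Hin; rewrite fdot_upd.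
case: (ltrgtP (a i0) 0) => Ha.
- have HinN : List.In (a, b) Ln by apply/List.filter_In.
  have := Hs1 _ (List.in_map (fun q => (q.2 - r q.1) / q.1 i0) _ _ HinN) => /= H1.
  have : a i0 * s <= a i0 * ((b - r a) / a i0) by rewrite ler_nM2l.
  rewrite [a i0 * (_ / _)]mulrC divfK ?ltr0_neq0 // /r; lra.
- have HinP : List.In (a, b) Lp by apply/List.filter_In.
  have := Hs2 _ (List.in_map (fun p => (p.2 - r p.1) / p.1 i0) _ _ HinP) => /= H1.
  have : a i0 * s <= a i0 * ((b - r a) / a i0) by rewrite ler_pM2l.
  rewrite [a i0 * (_ / _)]mulrC divfK ?lt0r_neq0 // /r; lra.
- have HinZ : List.In (a, b) L'.
    by apply/List.in_app_iff; left; apply/List.filter_In; rewrite /= Ha eqxx.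
  have := Hy' _ _ HinZ; rewrite Ha !mul0r; lra.
Qed.

Lemma In_enum (J : finType) (j : J) : List.In j (enum J).
Proof.
have : j \in enum J by rewrite mem_enum.
elim: (enum J) => // x s IH /predU1P [->|/IH] /=; by [left|right].
Qed.

Lemma conic_mult (J : finType) (A : J -> I -> R) (B : J -> R) a b :
  conic (List.map (fun j => (A j, B j)) (enum J)) a b ->
  exists mu : J -> R, (forall j, 0 <= mu j) /\
    (forall i, a i = \sum_j mu j * A j i) /\ b = \sum_j mu j * B j.
Proof.
elim=> {a b}.
- exists (fun _ => 0); split => //; split => [i|]; rewrite big1 // => j _; by rewrite mul0r.
- move=> a b k /List.in_map_iff [j [[<- <-] _]] k0.
  exists (fun j' => if j' == j then k else 0); split => [j'|]; first by case: ifP.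
  split => [i|]; rewrite (bigD1 j) //= eqxx big1 ?addr0 // => j' /negbTE ->; by rewrite mul0r.
- move=> a1 b1 a2 b2 _ [m1 [H1 [H1a H1b]]] _ [m2 [H2 [H2a H2b]]].
  exists (fun j => m1 j + m2 j); split => [j|]; first by rewrite addr_ge0.
  split => [i|]; rewrite ?H1a ?H2a ?H1b ?H2b -big_split /=; apply: eq_bigr => j _; by rewrite mulrDl.
- move=> a a' b b' _ [m [H [Ha Hb]]] Ha' <-; exists m; split => //; split => // i.
  by rewrite -Ha'.
Qed.

Lemma farkas (J : finType) (A : J -> I -> R) (B : J -> R) :
  (exists y : I -> R, forall j, fdot (A j) y <= B j) \/
  (exists mu : J -> R, (forall j, 0 <= mu j) /\
     (forall i, \sum_j mu j * A j i = 0) /\ \sum_j mu j * B j < 0).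
Proof.
have := @FM_aux #|[set: I]%SET| [set: I]%SET (List.map (fun j => (A j, B j)) (enum J)) erefl.
case => [a b _ i|[y Hy]|[b [Hb Hc]]]; first by rewrite inE.
  left; exists y => j; apply: Hy; apply: (List.in_map (fun j => (A j, B j))); exact: In_enum.
right; have [mu [H0 [Ha Hb']]] := conic_mult Hc.
exists mu; split => //; split => [i|]; by rewrite -?Ha -?Hb'.
Qed.

End FM.


Local Open Scope classical_set_scope.

Section MinLemma.
Variable (R : realDomainType).

Lemma seq_min (T : eqType) (F : T -> R) (s : seq T) : s != [::] ->
  exists a, a \in s /\ forall b, b \in s -> F a <= F b.
Proof.
elim: s => // x s IH _.
case: (altP (s =P [::])) => [->|/IH [a [Ha Hb]]].
  by exists x; split; rewrite ?mem_head // => b; rewrite inE => /eqP ->.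
case: (lerP (F x) (F a)) => Hxa.
  exists x; split; first exact: mem_head.
  by move=> b; rewrite inE => /predU1P [->|/Hb]; [|apply: le_trans].
exists a; split; first by rewrite inE Ha orbT.
by move=> b; rewrite inE => /predU1P [->|/Hb]; [apply: ltW|].
Qed.

Lemma fin_min (T : finType) (P : pred T) (F : T -> R) a0 : P a0 ->
  exists a, P a /\ forall b, P b -> F a <= F b.
Proof.
move=> Pa0.
have : [seq x <- enum T | P x] != [::].
  apply/eqP => H; have : a0 \in [seq x <- enum T | P x] by rewrite mem_filter Pa0 mem_enum.
  by rewrite H.
case/(seq_min F) => a [Ha Hb]; exists a; split.
  by move: Ha; rewrite mem_filter => /andP [].
by move=> b Pb; apply: Hb; rewrite mem_filter Pb mem_enum.
Qed.
End MinLemma.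

Section Net.
Variables (R : realType) (V A : finType) (tail head : A -> V) (o d : V).

Let X := @feasX R V A tail head o d.

Definition circ (e : A -> R) := forall v : V,
  \sum_(a | tail a == v) e a - \sum_(a | head a == v) e a = 0.

Definition supp (x : A -> R) : {set A} := finset (fun a => x a != 0).

Lemma X_ge0 x : X x -> forall a, 0 <= x a.
Proof. by case. Qed.

Lemma circ_diff x y : X x -> X y -> circ (fun a => y a - x a).
Proof.
move=> [Hx _] [Hy _] v; rewrite !sumrB; move: (Hx v) (Hy v); lra.
Qed.

Lemma X_add x e s : X x -> circ e -> (forall a, 0 <= x a + s * e a) ->
  X (fun a => x a + s * e a).
Proof.
move=> [Hx _] He Hpos; split => // v.
rewrite !big_split /= -!mulr_sumr; move: (Hx v) (He v) => H1 H2.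
have -> : \sum_(a | tail a == v) x a + s * (\sum_(i | tail i == v) e i) -
   (\sum_(a | head a == v) x a + s * (\sum_(i | head i == v) e i)) =
   (\sum_(a | tail a == v) x a - \sum_(a | head a == v) x a) +
   s * (\sum_(i | tail i == v) e i - \sum_(i | head i == v) e i) by ring.
by rewrite H1 H2 mulr0 addr0.
Qed.

Variable kappa : (A -> R) -> R.
Hypothesis kext : forall x y, (forall a, x a = y a) -> kappa x = kappa y.
Hypothesis klin : forall x y al be,
  kappa (fun a => al * x a + be * y a) = al * kappa x + be * kappa y.
Hypothesis kpos : forall e, (forall a, 0 <= e a) -> 0 <= kappa e.

Lemma kscale e s : kappa (fun a => s * e a) = s * kappa e.
Proof.
rewrite -[RHS]addr0 -(mul0r (kappa e)) -klin; apply: kext => a; ring.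
Qed.

Lemma choose_dir e a1 : e a1 != 0 ->
  exists sg : R, (sg = 1 \/ sg = -1) /\ sg * kappa e <= 0 /\ exists a, sg * e a < 0.
Proof.
move=> He1.
case: (pselect (exists a, e a < 0)) => [[a Ha]|Hneg].
  case: (lerP (kappa e) 0) => Hk.
    by exists 1; split; [left|split; [rewrite mul1r|exists a; rewrite mul1r]].
  case: (pselect (exists a, 0 < e a)) => [[b Hb]|Hpos].
    by exists (-1); split; [right|split; [rewrite mulN1r oppr_le0 ltW //|exists b; rewrite mulN1r oppr_lt0 //]].
  exfalso; have : 0 <= kappa (fun a => -1 * e a).
    apply: kpos => b; rewrite mulN1r oppr_ge0 leNgt; apply/negP => Hb; apply: Hpos; by exists b.
  rewrite kscale mulN1r oppr_ge0 => H; move: Hk; rewrite ltNge H //.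
have Hge : forall a, 0 <= e a.
  by move=> a; rewrite leNgt; apply/negP => Ha; apply: Hneg; exists a.
have Hk := kpos Hge.
exists (-1); split; [by right|split; [rewrite mulN1r oppr_le0 //|exists a1]].
rewrite mulN1r oppr_lt0 lt_neqAle Hge andbT eq_sym //.
Qed.

Lemma move_step x y : X x -> X y -> y <> x -> (forall a, x a = 0 -> y a = 0) ->
  exists x', X x' /\ kappa x' <= kappa x /\ (#|supp x'| < #|supp x|)%N.
Proof.
move=> Hx Hy Hyx Hsupp.
pose e := fun a => y a - x a.
have He : circ e by exact: circ_diff.
have [a1 Ha1] : exists a1, e a1 != 0.
  apply: contrapT => H; apply: Hyx; apply: funext => a.
  apply/eqP; rewrite -subr_eq0; apply/negPn/negP => Ha; apply: H; by exists a.
have [sg [Hsg [Hk [a2 Ha2]]]] := choose_dir Ha1.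
pose f := fun a => sg * e a.
have [am [Ham Hmin]] := fin_min (fun a => x a / (- f a)) (introT idP Ha2 : (fun a => f a < 0) a2).
pose s := x am / (- f am).
have Hfam : 0 < - f am by rewrite oppr_gt0.
have Hs0 : 0 <= s by apply: divr_ge0; [exact: X_ge0 Hx am | exact: ltW].
have Hx0 : forall a, x a = 0 -> e a = 0 by move=> a H; rewrite /e Hsupp // H subrr.
have Hxam : x am != 0.
  apply/eqP => H; move: Ham; rewrite /f Hx0 // mulr0 ltxx //.
pose x' := fun a => x a + (s * sg) * e a.
have Hx'pos : forall a, 0 <= x a + (s * sg) * e a.
  move=> a; rewrite -mulrA -/(f a); case: (ltrP (f a) 0) => Hfa.
    have := Hmin a Hfa; rewrite -/s => Hsa.
    have Hfa' : 0 < - f a by rewrite oppr_gt0.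
    have : s * (- f a) <= x a by rewrite -ler_pdivlMr.
    lra.
  by rewrite addr_ge0 ?(X_ge0 Hx) // mulr_ge0.
exists x'; split; first exact: X_add.
split.
  rewrite /x' -(kext (x := fun a => 1 * x a + (s * sg) * e a)); last by move=> a; rewrite mul1r.
  rewrite klin mul1r -mulrA gerDl; exact: mulr_ge0_le0.
have Hsub : supp x' \subset supp x :\ am.
  apply/fintype.subsetP => a; rewrite !inE /x' => Ha; apply/andP; split.
    apply: contraTneq Ha => ->; rewrite negbK -mulrA -/(f am) /s; apply/eqP.
    have Hf : f am != 0 by rewrite ltr0_neq0.
    by field.
  by apply: contraNneq Ha => Hxa; rewrite Hxa Hx0 // mulr0 addr0.
apply: (leq_ltn_trans (subset_leq_card Hsub)).
by rewrite (cardsD1 am (supp x)) inE Hxam add1n ltnS leqnn.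
Qed.

Lemma ext_red x : X x -> exists x', extreme_point X x' /\ kappa x' <= kappa x.
Proof.
suff : forall n x, (#|supp x| < n)%N -> X x ->
    exists x', extreme_point X x' /\ kappa x' <= kappa x.
  by move=> H; apply: (H #|supp x|.+1).
elim=> // n IH {}x Hn Hx.
case: (pselect (extreme_point X x)) => [E|NE]; first by exists x.
have [y [Hy [Hyx Hys]]] : exists y, X y /\ y <> x /\ (forall a, x a = 0 -> y a = 0).
  apply: contrapT => H; apply: NE; split => // y z l Hy Hz Hl Hxe.
  have Hzero : forall a, x a = 0 -> y a = 0 /\ z a = 0.
    move=> a Ha; move: (congr1 (fun f => f a) Hxe) => /=; rewrite Ha => H0.
    case/andP: Hl => Hl0 Hl1.
    have Hya := X_ge0 Hy a; have Hza := X_ge0 Hz a.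
    have H1 : 0 <= l * y a by rewrite mulr_ge0 // ltW.
    have H2 : 0 <= (1 - l) * z a by rewrite mulr_ge0 // subr_ge0 ltW.
    have Ey : l * y a = 0 by lra.
    have Ez : (1 - l) * z a = 0 by lra.
    move/eqP: Ey; rewrite mulf_eq0 gt_eqF //= => /eqP ->.
    by move/eqP: Ez; rewrite mulf_eq0 subr_eq0 eq_sym lt_eqF //= => /eqP ->.
  split; apply: contrapT => Hne; apply: H.
    by exists y; split => //; split => // a /Hzero [].
  by exists z; split => //; split => // a /Hzero [].
have [x' [Hx' [Hk Hcard]]] := move_step Hx Hy Hyx Hys.
have [x'' [E Hk']] := IH x' (leq_trans Hcard Hn) Hx'.
exists x''; split => //; exact: le_trans Hk' Hk.
Qed.

Lemma ext_uniq x x' : extreme_point X x -> X x' ->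
  (forall a, x a = 0 -> x' a = 0) -> x' = x.
Proof.
move=> [Hx Hext] Hx' Hs.
pose e := fun a => x' a - x a.
have He : circ e by exact: circ_diff.
have Hx0 : forall a, x a = 0 -> e a = 0 by move=> a H; rewrite /e Hs // H subrr.
apply: funext => a0; apply/eqP; rewrite -subr_eq0 -/(e a0); apply/negPn/negP => Hd.
have Hxa0 : x a0 != 0 by apply: contraNneq Hd => /Hx0 ->.
have [am [Ham Hmin]] := fin_min (fun a => x a / (`|e a| + 1))
   (Hxa0 : (fun a => x a != 0) a0).
pose eps := x am / (`|e am| + 1).
have Hxam : 0 < x am by rewrite lt0r Ham (X_ge0 Hx).
have Heps : 0 < eps.
  by apply: divr_gt0 => //; have := normr_ge0 (e am); lra.
have Hb : forall a, eps * `|e a| <= x a.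
  move=> a; case: (altP (x a =P 0)) => Hxa.
    by rewrite Hx0 // normr0 mulr0 Hxa.
  have := Hmin a Hxa; rewrite -/eps => H1.
  have Hn := normr_ge0 (e a).
  have H2 : eps * (`|e a| + 1) <= x a by rewrite -ler_pdivlMr //; lra.
  lra.
have Hpos : forall s, `|s| <= eps -> forall a, 0 <= x a + s * e a.
  move=> s Hs' a; have := Hb a; have := normr_ge0 (e a); have := normr_ge0 s.
  have : `|s * e a| <= eps * `|e a|.
    by rewrite normrM ler_wpM2r.
  have := ler_norm (- (s * e a)); rewrite normrN.
  lra.
have Hn1 : `|eps| <= eps by rewrite ger0_norm // ltW.
have Hn2 : `|- eps| <= eps by rewrite normrN.
have Hy := X_add Hx He (Hpos _ Hn1).
have Hz := X_add Hx He (Hpos _ Hn2).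
have Hl : (0 : R) < (2^-1 : R) < 1.
  have h2 : (0:R) < 2^-1 by rewrite invr_gt0 ltr0n.
  have h3 : (2:R)^-1 < 1 by rewrite invf_lt1 ?ltr0n // ltr1n.
  by rewrite h2 h3.
have Hxeq : x = (fun a => 2^-1 * (x a + eps * e a) + (1 - 2^-1) * (x a + - eps * e a)).
  apply: funext => a /=; have h2 : (2:R) != 0 by rewrite pnatr_eq0.
  by field.
have [Ey _] := Hext _ _ _ Hy Hz Hl Hxeq.
move: (congr1 (fun f => f a0) Ey) => /= /eqP; rewrite addrC -subr_eq0 addrK.
by rewrite mulf_eq0 (negbTE Hd) orbF gt_eqF.
Qed.

End Net.

Section Ext.
Variables (R : realType) (V A : finType) (tail head : A -> V) (o d : V).

Definition isExtS (B : {set A}) : bool :=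
  `[< exists x : A -> R, extreme_point (feasX tail head o d) x /\ supp x = B >].

Definition ST := {B : {set A} | isExtS B}.

Lemma ptex (P : ST) : exists x : A -> R,
  extreme_point (feasX tail head o d) x /\ supp x = val P.
Proof. exact: (elimT (asboolP _) (valP P)). Qed.

Definition pt (P : ST) : A -> R := proj1_sig (cid (ptex P)).

Lemma ptP (P : ST) : extreme_point (feasX tail head o d) (pt P) /\ supp (pt P) = val P.
Proof. exact: (proj2_sig (cid (ptex P))). Qed.

Lemma ext_pt (x : A -> R) : extreme_point (feasX tail head o d) x -> exists P : ST, pt P = x.
Proof.
move=> Hx.
have H : isExtS (supp x) by apply: asboolT; exists x.
pose P : ST := exist _ (supp x) H.
have [[E1 _] E2] := ptP P.
have E2' : supp (pt P) = supp x := E2.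
clearbody P; exists P.
apply: (ext_uniq (tail:=tail) (head:=head) (o:=o) (d:=d)) => // a Ha.
have : a \notin supp x by rewrite inE Ha eqxx.
by rewrite -E2' inE negbK => /eqP.
Qed.
End Ext.


Section Main.
Variables (R : realType) (V A : finType) (tail head : A -> V) (A1 : {set A})
  (c : A -> R) (o d : V).
Hypothesis c_ge0 : forall a, 0 <= c a.

Let X := @feasX R V A tail head o d.
Notation n := #|A1|.
Notation ST := (@ST R V A tail head o d).
Notation pt := (@pt R V A tail head o d).

Definition kap (t : 'rV[R]_n) (x : A -> R) : R :=
  \sum_a c a * x a + dotv t (restrA1 A1 x).

Lemma dotrE (t : 'rV[R]_n) (x : A -> R) :
  dotv t (restrA1 A1 x) = \sum_i t ord0 i * x (enum_val i).
Proof. by apply: eq_bigr => i _; rewrite mxE. Qed.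

Lemma kap_ext t x y : (forall a, x a = y a) -> kap t x = kap t y.
Proof. by move=> H; rewrite /kap !dotrE; congr (_ + _); apply: eq_bigr => i _; rewrite H. Qed.

Lemma kap_lin t x y al be :
  kap t (fun a => al * x a + be * y a) = al * kap t x + be * kap t y.
Proof.
rewrite /kap !dotrE.
transitivity ((al * (\sum_a c a * x a) + be * (\sum_a c a * y a)) +
   (al * (\sum_i t ord0 i * x (enum_val i)) + be * (\sum_i t ord0 i * y (enum_val i)))); last first.
  lra.
congr (_ + _); rewrite !mulr_sumr -big_split; by apply: eq_bigr => ? _ /=; ring.
Qed.

Lemma kap_pos t : nonneg_vec t -> forall e, (forall a, 0 <= e a) -> 0 <= kap t e.
Proof.
move=> Ht e He; rewrite /kap dotrE; apply: addr_ge0; apply: sumr_ge0 => i _;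
  exact: mulr_ge0.
Qed.

Lemma fval_nn t : nonneg_vec t ->
  fval tail head A1 c o d t = ereal_inf [set (kap t x)%:E | x in X].
Proof. by move=> Ht; rewrite /fval asboolT. Qed.

Lemma fval_le t x : nonneg_vec t -> X x -> (fval tail head A1 c o d t <= (kap t x)%:E)%E.
Proof. move=> Ht Hx; rewrite fval_nn //; apply: ge_ereal_inf; by exists (kap t x)%:E; [exists x|]. Qed.

Lemma fval_ge t m : nonneg_vec t -> (forall x, X x -> m <= kap t x) ->
  (m%:E <= fval tail head A1 c o d t)%E.
Proof.
move=> Ht H; rewrite fval_nn //; apply: le_ereal_inf_tmp => _ [x Hx <-].
by rewrite lee_fin; exact: H.
Qed.

Lemma fval_notnn t : ~ nonneg_vec t -> fval tail head A1 c o d t = (-oo)%E.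
Proof. by move=> Ht; rewrite /fval asboolF. Qed.

(* weak duality *)
Lemma W x (u : 'rV[R]_n) y : X x -> (forall i, restrA1 A1 x ord0 i <= u ord0 i) ->
  \sum_a c a * x a <= y -> epi_g tail head A1 c o d (u, y).
Proof.
move=> Hx Hu Hy; rewrite /epi_g /=; apply: ge_ereal_sup => _ [t _ <-].
case: (pselect (nonneg_vec t)) => Ht; last by rewrite fval_notnn //= leNye.
apply: (@le_trans _ _ ((kap t x)%:E - (dotv t u)%:E)%E).
  by apply: leeB => //; exact: fval_le.
rewrite -EFinB lee_fin /kap.
suff : dotv t (restrA1 A1 x) - dotv t u <= 0 by lra.
rewrite /dotv -sumrB; apply: sumr_le0 => i _; rewrite -mulrBr.
by apply: mulr_ge0_le0 => //; rewrite subr_le0.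
Qed.


Lemma pt_X (Q : ST) : X (pt Q).
Proof. by have [[]] := ptP Q. Qed.

Lemma pt_ge0 (Q : ST) a : 0 <= pt Q a.
Proof. exact: (X_ge0 (pt_X Q)). Qed.

Lemma sum_div (mu : ST -> R) (L : R) (F : ST -> R) :
  \sum_Q (mu Q / L) * F Q = L^-1 * \sum_Q mu Q * F Q.
Proof. by rewrite mulr_sumr; apply: eq_bigr => Q _; ring. Qed.

Lemma Wmix (mu : ST -> R) (u : 'rV[R]_n) y : (forall Q, 0 <= mu Q) -> 0 < \sum_Q mu Q ->
  (forall i, \sum_Q mu Q * pt Q (enum_val i) <= (\sum_Q mu Q) * u ord0 i) ->
  \sum_Q mu Q * (\sum_a c a * pt Q a) <= (\sum_Q mu Q) * y ->
  epi_g tail head A1 c o d (u, y).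
Proof.
move=> Hmu HL Hu Hy.
set L := \sum_Q mu Q in HL Hu Hy.
have HL0 : L != 0 by rewrite gt_eqF.
pose x := fun a => \sum_Q (mu Q / L) * pt Q a.
have Hx : X x.
  split => [v|a]; last first.
    by apply: sumr_ge0 => Q _; apply: mulr_ge0; [apply: divr_ge0; [|apply: ltW]|exact: pt_ge0].
  rewrite /x exchange_big [X in _ - X]exchange_big /=.
  rewrite -sumrB.
  transitivity (\sum_Q (mu Q / L) * @rhs R V o d v).
    apply: eq_bigr => Q _; rewrite -!mulr_sumr -mulrBr.
    by have [[[Hc _] _] _] := ptP Q; rewrite Hc.
  rewrite -mulr_suml -mulr_suml -/L mulfV //; exact: mul1r.
apply: (W Hx).
  move=> i; rewrite mxE /x sum_div.
  rewrite -(ler_pM2l HL) mulrA mulfV // mul1r; exact: Hu.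
have -> : \sum_a c a * x a = \sum_Q (mu Q / L) * (\sum_a c a * pt Q a).
  rewrite /x; under eq_bigr do rewrite mulr_sumr.
  rewrite exchange_big /=; apply: eq_bigr => Q _; rewrite mulr_sumr.
  by apply: eq_bigr => a _; ring.
rewrite sum_div -(ler_pM2l HL) mulrA mulfV // mul1r; exact: Hy.
Qed.


Lemma LBex t (x0 : A -> R) : X x0 -> nonneg_vec t ->
  exists Q0 : ST, forall x, X x -> kap t (pt Q0) <= kap t x.
Proof.
move=> Hx0 Ht.
have [x1 [E1 _]] := ext_red (@kap_ext t) (@kap_lin t) (kap_pos Ht) Hx0.
have [P0 _] := ext_pt E1.
have [Q0 [_ Hmin]] := @fin_min _ ST predT (fun Q => kap t (pt Q)) P0 isT.
exists Q0 => x Hx.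
have [x' [E' Hk]] := ext_red (@kap_ext t) (@kap_lin t) (kap_pos Ht) Hx.
have [Q' HQ'] := ext_pt E'.
by apply: le_trans (Hmin Q' isT) _; rewrite HQ'.
Qed.

Lemma nn0 : nonneg_vec (0 : 'rV[R]_n).
Proof. by move=> i; rewrite mxE. Qed.

Lemma Xne (w : 'rV[R]_n) z : (gval tail head A1 c o d w <= z%:E)%E -> exists x0, X x0.
Proof.
move=> Hz; apply: contrapT => Hno.
have H0 : (+oo <= fval tail head A1 c o d 0)%E.
  rewrite fval_nn; last exact: nn0.
  by apply: le_ereal_inf_tmp => _ [x Hx <-]; exfalso; apply: Hno; exists x.
have : (+oo <= gval tail head A1 c o d w)%E.
  apply: le_ereal_sup_tmp; exists (fval tail head A1 c o d 0 - (dotv 0 w)%:E)%E; first by exists 0.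
  by move: H0; rewrite leye_eq => /eqP ->.
move=> H; have := le_trans H Hz; by rewrite leye_eq.
Qed.

Lemma G1 (w : 'rV[R]_n) z : (gval tail head A1 c o d w <= z%:E)%E ->
  forall t, nonneg_vec t -> exists Q : ST, kap t (pt Q) - dotv t w <= z.
Proof.
move=> Hz t Ht.
have [x0 Hx0] := Xne Hz.
have [Q0 HQ0] := LBex Hx0 Ht.
exists Q0.
have H1 := fval_ge Ht HQ0.
have H2 : (fval tail head A1 c o d t - (dotv t w)%:E <= gval tail head A1 c o d w)%E.
  by apply: le_ereal_sup_tmp; exists (fval tail head A1 c o d t - (dotv t w)%:E)%E; first by exists t.
rewrite -lee_fin EFinB; apply: le_trans _ (le_trans H2 Hz); exact: leeB.
Qed.

End Main.


Section Main2.
Variables (R : realType) (V A : finType) (tail head : A -> V) (A1 : {set A})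
  (c : A -> R) (o d : V).
Hypothesis c_ge0 : forall a, 0 <= c a.

Let X := @feasX R V A tail head o d.
Notation n := #|A1|.
Notation ST := (@ST R V A tail head o d).
Notation pt := (@pt R V A tail head o d).
Notation kap := (@kap R A A1 c).
Notation epi := (epi_g tail head A1 c o d).

Lemma sum_ind (T : finType) (F : T -> R) Q : \sum_P F P * - ((Q == P)%:R) = - F Q.
Proof.
rewrite (bigD1 Q) //= eqxx big1 => [|P HP]; first by rewrite addr0 mulrN1.
by rewrite eq_sym (negbTE HP) /= oppr0 mulr0.
Qed.

Lemma sum_ind' (T : finType) (F : T -> R) Q : \sum_P (- ((P == Q)%:R)) * F P = - F Q.
Proof.
rewrite (bigD1 Q) //= eqxx big1 => [|P HP]; first by rewrite addr0 mulN1r.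
by rewrite (negbTE HP) /= oppr0 mul0r.
Qed.

Lemma stepM (w : 'rV[R]_n) z :
  (gval tail head A1 c o d w <= z%:E)%E ->
  (forall p q l, epi p -> epi q -> 0 < l < 1 -> comb l p q = (w, z) -> p = (w, z)) ->
  exists P : ST, restrA1 A1 (pt P) = w /\ \sum_a c a * pt P a = z.
Proof.
move=> Hgz Hface.
pose b (Q : ST) (i : 'I_n) := pt Q (enum_val i).
pose aQ (Q : ST) := \sum_a c a * pt Q a.
have HaQ : forall Q, 0 <= aQ Q.
  by move=> Q; apply: sumr_ge0 => a _; apply: mulr_ge0 => //; exact: pt_ge0.
pose Acoef := fun (j : ST + ('I_n + bool)) (P : ST) => match j with
  | inl Q => - ((P == Q)%:R) | inr (inl i) => b P i - w ord0 i
  | inr (inr true) => aQ P - z | inr (inr false) => -1 end.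
pose Bcoef := fun (j : ST + ('I_n + bool)) => (match j with inr (inr false) => -1 | _ => 0 end : R).
case: (farkas Acoef Bcoef) => [[lam Hlam]|[mu [Hmu0 [HmuA HmuB]]]]; last first.
  exfalso.
  move: HmuB; rewrite big_sumType /= big_sumType /= big_bool /=.
  rewrite big1 => [|Q _]; last by rewrite mulr0.
  rewrite big1 => [|i _]; last by rewrite mulr0.
  set nu := mu (inr (inr false)); set s := mu (inr (inr true)) => Hnu.
  have Hnu0 : 0 < nu by lra.
  have HT : forall P, \sum_i mu (inr (inl i)) * (b P i - w ord0 i) =
      mu (inl P) + nu - s * (aQ P - z).
    move=> P; have := HmuA P; rewrite big_sumType /= big_sumType /= big_bool /= sum_ind.
    rewrite -/nu -/s; lra.
  have Hs0 : 0 <= s := Hmu0 _.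
  set eps := nu / (`|z| + 1).
  have Hz1 : 0 < `|z| + 1 by have := normr_ge0 z; lra.
  have Heps : 0 < eps by apply: divr_gt0.
  set sg := s + eps.
  have Hsg : 0 < sg by rewrite /sg; lra.
  pose t' : 'rV[R]_n := \row_i (mu (inr (inl i)) / sg).
  have Ht' : nonneg_vec t' by move=> i; rewrite mxE divr_ge0 // ltW.
  have [Q HQ] := G1 c_ge0 Hgz Ht'.
  have Hk : kap t' (pt Q) - dotv t' w =
      aQ Q + sg^-1 * \sum_i mu (inr (inl i)) * (b Q i - w ord0 i).
    rewrite /kap dotrE /dotv -addrA; congr (_ + _).
    rewrite -sumrB mulr_sumr; apply: eq_bigr => i _; rewrite !mxE /b; ring.
  rewrite Hk HT in HQ.
  have Hmq := Hmu0 (inl Q).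
  have HaQQ := HaQ Q.
  have H1 : eps * (`|z| + 1) = nu by rewrite /eps divfK // gt_eqF.
  have H2 : eps * z <= eps * `|z| by apply: ler_wpM2l; [exact: ltW | exact: ler_norm].
  have H3 : 0 <= eps * aQ Q by rewrite mulr_ge0 // ltW.
  have H4 : sg * (aQ Q + sg^-1 * (mu (inl Q) + nu - s * (aQ Q - z))) <= sg * z.
    by rewrite ler_pM2l.
  rewrite mulrDr mulrA mulfV ?gt_eqF // mul1r /sg in H4.
  clear -H1 H2 H3 H4 Hnu0 Heps Hmq Hs0 HaQQ; lra.
have Hl0 : forall Q, 0 <= lam Q.
  move=> Q; have := Hlam (inl Q); rewrite /fdot /= sum_ind'; lra.
have Hl1 : 1 <= \sum_Q lam Q.
  have := Hlam (inr (inr false)); rewrite /fdot /=.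
  under eq_bigr do rewrite mulN1r.
  rewrite sumrN; lra.
have Hlb : forall i, \sum_Q lam Q * b Q i <= (\sum_Q lam Q) * w ord0 i.
  move=> i; have := Hlam (inr (inl i)); rewrite /fdot /=.
  have -> : \sum_P (b P i - w ord0 i) * lam P =
     \sum_Q lam Q * b Q i - (\sum_Q lam Q) * w ord0 i.
    by rewrite mulr_suml -sumrB; apply: eq_bigr => Q _; ring.
  lra.
have Hla : \sum_Q lam Q * aQ Q <= (\sum_Q lam Q) * z.
  have := Hlam (inr (inr true)); rewrite /fdot /=.
  have -> : \sum_P (aQ P - z) * lam P =
     \sum_Q lam Q * aQ Q - (\sum_Q lam Q) * z.
    by rewrite mulr_suml -sumrB; apply: eq_bigr => Q _; ring.
  lra.
have [P HP] : exists P, 0 < lam P.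
  apply: contrapT => H.
  have : \sum_Q lam Q <= 0.
    apply: sumr_le0 => Q _; rewrite leNgt; apply/negP => HQ; apply: H; by exists Q.
  lra.
set L := \sum_Q lam Q in Hl1 Hlb Hla.
have HPL : lam P <= L.
  rewrite /L (bigD1 P) //= lerDl; apply: sumr_ge0 => Q _; exact: Hl0.
pose l := lam P / (2 * L).
have HL0 : 0 < L by lra.
have H2L : 0 < 2 * L by lra.
have Hl : 0 < l < 1.
  apply/andP; split; first by rewrite /l divr_gt0.
  by rewrite /l ltr_pdivrMr //; lra.
have Hl1' : 1 - l != 0 by case/andP: Hl => _ Hl'; rewrite subr_eq0 eq_sym lt_eqF.
have HlL : l * L = lam P / 2 by rewrite /l; field; rewrite gt_eqF.
pose mu := fun Q => lam Q - (Q == P)%:R * (lam P / 2).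
have Hmu0 : forall Q, 0 <= mu Q.
  move=> Q; rewrite /mu; case: (altP (Q =P P)) => [->|HQ] /=.
    by rewrite ?eqxx mul1r; lra.
  by rewrite mul0r subr0.
have Hsmu : forall F : ST -> R, \sum_Q mu Q * F Q = \sum_Q lam Q * F Q - (lam P / 2) * F P.
  move=> F; rewrite /mu; under eq_bigr do rewrite mulrBl.
  rewrite sumrB; congr (_ - _).
  rewrite (bigD1 P) //= eqxx mul1r big1 ?addr0 // => Q HQ.
  by rewrite (negbTE HQ) mul0r mul0r.
have HM : \sum_Q mu Q = L * (1 - l).
  have := Hsmu (fun _ => 1); under eq_bigr do rewrite mulr1.
  move=> ->; rewrite mulr1; under eq_bigr do rewrite mulr1.
  by rewrite -/L mulrBr mulr1 [L * l]mulrC HlL.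
pose q := ((1 - l)^-1 *: (w - l *: restrA1 A1 (pt P)), (1 - l)^-1 * (z - l * aQ P)).
have Hq : epi q.
  apply: (Wmix (mu := mu)) => //.
  - by rewrite HM mulr_gt0 // subr_gt0; case/andP: Hl.
  - move=> i; rewrite Hsmu HM !mxE.
    have -> : L * (1 - l) * ((1 - l)^-1 * (w ord0 i - l * pt P (enum_val i))) =
       L * w ord0 i - lam P / 2 * pt P (enum_val i).
      by rewrite -HlL; field.
    have := Hlb i; rewrite /b; lra.
  - rewrite Hsmu HM /q /=.
    have -> : L * (1 - l) * ((1 - l)^-1 * (z - l * aQ P)) = L * z - lam P / 2 * aQ P.
      by rewrite -HlL; field.
    rewrite /aQ in Hla *; lra.
have Hp' : epi (restrA1 A1 (pt P), aQ P).
  by apply: (W (pt_X P)).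
have Hc : comb l (restrA1 A1 (pt P), aQ P) q = (w, z).
  rewrite /comb /q /=; congr pair.
    by apply/rowP => i; rewrite !mxE; field.
  by field.
have := Hface _ _ _ Hp' Hq Hl Hc => -[E1 E2].
by exists P.
Qed.


Lemma stepT (w : 'rV[R]_n) z :
  (forall p q l, epi p -> epi q -> 0 < l < 1 -> comb l p q = (w, z) -> p = (w, z)) ->
  exists t, nonneg_vec t /\ forall Q : ST, z + dotv t w <= kap t (pt Q).
Proof.
move=> Hface.
pose b (Q : ST) (i : 'I_n) := pt Q (enum_val i).
pose aQ (Q : ST) := \sum_a c a * pt Q a.
pose Acoef := fun (j : ST + 'I_n) (i : 'I_n) => match j with
  | inl Q => - (b Q i - w ord0 i) | inr i' => - ((i == i')%:R) end.
pose Bcoef := fun (j : ST + 'I_n) => match j with inl Q => aQ Q - z | inr _ => 0 end.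
case: (farkas Acoef Bcoef) => [[y Hy]|[mu [Hmu0 [HmuA HmuB]]]].
  pose t : 'rV[R]_n := \row_i y i.
  exists t; split.
    move=> i; rewrite mxE; have := Hy (inr i); rewrite /fdot /= sum_ind'; lra.
  move=> Q; have := Hy (inl Q); rewrite /fdot /=.
  have -> : \sum_i - (b Q i - w ord0 i) * y i =
      dotv t w - \sum_i t ord0 i * pt Q (enum_val i).
    by rewrite /dotv -sumrB; apply: eq_bigr => i _; rewrite !mxE /b; ring.
  rewrite /kap dotrE /aQ; lra.
exfalso.
pose m := fun Q => mu (inl Q).
move: HmuB; rewrite big_sumType /=.
rewrite [X in _ + X]big1 => [|i _]; last by rewrite mulr0.
rewrite addr0 => HmuB.
have Hb : forall i, \sum_Q m Q * b Q i <= (\sum_Q m Q) * w ord0 i.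
  move=> i; have := HmuA i; rewrite big_sumType /= sum_ind.
  have Hi := Hmu0 (inr i).
  have -> : \sum_Q mu (inl Q) * - (b Q i - w ord0 i) =
     (\sum_Q m Q) * w ord0 i - \sum_Q m Q * b Q i.
    by rewrite mulr_suml -sumrB; apply: eq_bigr => Q _; rewrite /m; ring.
  lra.
have Hm0 : forall Q, 0 <= m Q by move=> Q; exact: Hmu0.
have HL : 0 < \sum_Q m Q.
  rewrite lt_neqAle sumr_ge0 // andbT eq_sym; apply/negP => /eqP.
  move/psumr_eq0P => H.
  move: HmuB; rewrite big1 ?ltxx // => Q _; rewrite -/(m Q) H ?mul0r //.
set L := \sum_Q m Q in Hb HL.
set del := - \sum_Q mu (inl Q) * (aQ Q - z).
have Hdel : 0 < del by rewrite /del oppr_gt0.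
have Hma : \sum_Q m Q * aQ Q = L * z - del.
  rewrite /del opprK /L mulr_suml -big_split /=.
  by apply: eq_bigr => Q _; rewrite /m; ring.
have HL0 : L != 0 by rewrite gt_eqF.
pose p := (w, z - del / L).
pose q := (w, z + del / L).
have Hp : epi p.
  apply: (Wmix (mu := m)) => //=; rewrite Hma.
  have -> : L * (z - del / L) = L * z - del by field.
  exact: lexx.
have Hq : epi q.
  apply: (Wmix (mu := m)) => //=; rewrite Hma.
  have -> : L * (z + del / L) = L * z + del by field.
  lra.
have Hl : (0 : R) < (2^-1 : R) < 1.
  have h2 : (0:R) < 2^-1 by rewrite invr_gt0 ltr0n.
  have h3 : (2:R)^-1 < 1 by rewrite invf_lt1 ?ltr0n // ltr1n.
  by rewrite h2 h3.
have Hc : comb 2^-1 p q = (w, z).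
  have h2 : (2:R) != 0 by rewrite pnatr_eq0.
  rewrite /comb /p /q /=; congr pair.
    by apply/rowP => i; rewrite !mxE; field.
  by field.
have := Hface _ _ _ Hp Hq Hl Hc => -[] H.
have /eqP : del / L = 0 by lra.
by rewrite mulf_eq0 invr_eq0 (negbTE HL0) orbF gt_eqF.
Qed.


Lemma main (w : 'rV[R]_n) : strongly_bilevel_feasible tail head A1 c o d w ->
  exists x : A -> R, extreme_point X x /\ bilevel_feasible tail head A1 c o d x /\
    restrA1 A1 x = w.
Proof.
move=> [F [[HFC [_ HFf]] [Hnv Hproj]]].
have Fw : forall p, F p -> p.1 = w.
  move=> [p1 p2] Hp /=.
  have : [set w' | exists z, F (w', z)] p1 by exists p2.
  by rewrite Hproj.
have [z Hz] : exists z, F (w, z).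
  have : [set w' | exists z, F (w', z)] w by rewrite Hproj.
  by [].
have Funiq : forall p q, F p -> F q -> p = q.
  move=> [p1 p2] [q1 q2] Hp Hq.
  have /= E1 := Fw _ Hp; have /= E2 := Fw _ Hq; subst p1 q1.
  case: (eqVneq p2 q2) => [->//|Hne]; exfalso; apply: Hnv.
  exists [:: ((p2 - q2)^-1, ((w, p2), (w, q2)))]; split.
    by move=> k; rewrite inE => /eqP -> /=.
  by rewrite !big_seq1 /= subrr scaler0 mulVf // subr_eq0.
have Hface : forall p q l, epi p -> epi q -> 0 < l < 1 -> comb l p q = (w, z) -> p = (w, z).
  move=> p q l Hp Hq Hl Hc.
  have HF : F (comb l p q) by rewrite Hc.
  have [Fp _] := HFf p q l Hp Hq Hl HF.
  exact: Funiq.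
have Hgz : (gval tail head A1 c o d w <= z%:E)%E := HFC _ Hz.
have [P [HPw HPz]] := stepM Hgz Hface.
have [t [Ht HtQ]] := stepT Hface.
exists (pt P); split; first by have [] := ptP P.
split => //.
split; first exact: pt_X.
split.
  move=> [t1 y] /=; rewrite /epi_negf /=.
  case: (pselect (nonneg_vec t1)) => Ht1; last by rewrite fval_notnn //= leye_eq.
  move=> Hy; have := fval_le c Ht1 (pt_X P).
  rewrite -leeN2 => H; have := le_trans H Hy; rewrite -EFinN lee_fin /kap; lra.
exists (t, - (\sum_a c a * pt P a) - dotv t (restrA1 A1 (pt P))); split => //.
have H : ((kap t (pt P))%:E <= fval tail head A1 c o d t)%E.
  apply: (fval_ge (m := kap t (pt P)) Ht) => x Hx.
  have [x' [E' Hk]] := ext_red (kap_ext c t) (kap_lin c t) (kap_pos c_ge0 Ht) Hx.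
  have [Q HQ] := ext_pt E'.
  apply: le_trans Hk; rewrite -HQ; apply: le_trans (HtQ Q).
  by rewrite /kap HPz HPw.
rewrite /epi_negf /=.
have -> : - (\sum_a c a * pt P a) - dotv t (restrA1 A1 (pt P)) = - kap t (pt P).
  by rewrite /kap opprD.
by rewrite EFinN leeN2.
Qed.

End Main2.


Theorem proposition4 (R : realType) (V A : finType) (tail head : A -> V)
  (A1 : {set A}) (c : A -> R) (o d : V) (w : 'rV[R]_#|A1|) :
  injective (fun a => (tail a, head a)) ->
  (forall a, 0 <= c a) ->
  (0 < #|A1| < #|A|)%N ->
  o != d ->
  (exists s, tollfree_path tail head A1 o d s) ->
  (forall i, 0 <= w ord0 i) ->
  strongly_bilevel_feasible tail head A1 c o d w ->
  exists x : A -> R,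
    extreme_point (feasX tail head o d) x /\
    bilevel_feasible tail head A1 c o d x /\
    restrA1 A1 x = w.
Proof.
move=> _ Hc _ _ _ _ H.
exact: (main Hc H).
Qed.
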